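(* Let $p_{Y_1,Y_2|X_1,X_2}$ be a discrete memoryless channel and let $(U_{10},U_{11},V_{11},V_{20},V_{22},X_1,X_2)$ be finite-valued random variables with any joint distribution, $(Y_1,Y_2)$ generated through the channel. Let $\mathcal R_{CC}(p)$ be the set of $(R_1,R_2)$ satisfying \begin{align*} R_1 &\le I(Y_1;V_{11},U_{11},V_{20},U_{10}),\\ R_2 &\le I(Y_2;V_{20},V_{22}|U_{10})-I(V_{22},V_{20};U_{11}|U_{10}),\\ R_1+R_2 &\le I(Y_1;V_{11},U_{11}|V_{20},U_{10})+I(Y_2;V_{22},V_{20},U_{10})-I(V_{22};U_{11},V_{11}|V_{20},U_{10}),\\ R_1+R_2 &\le I(Y_1;V_{11},U_{11},V_{20},U_{10})+I(Y_2;V_{22}|V_{20},U_{10})-I(V_{22};U_{11},V_{11}|V_{20},U_{10}),\\ 2R_2+R_1 &\le I(Y_1;V_{11},U_{11},V_{20}|U_{10})+I(Y_2;V_{22}|V_{20},U_{10})+I(Y_2;V_{20},V_{22},U_{10})\\ &\quad -I(V_{22};U_{11},V_{11}|V_{20},U_{10})-I(V_{22},V_{20};U_{11}|U_{10}), \end{align*} and let $\mathcal R_{CC}=\bigcup_p \mathcal R_{CC}(p)$. Let $p'$ be obtained from $p$ by setting $U'_{11}$ constant and $V'_{11}=(V_{11},U_{11})$, all other variables unchanged. Then $\mathcal R_{CC}(p)\subseteq\mathcal R_{CC}(p')$; in particular $\mathcal R_{CC}$ equals the union of $\mathcal R_{CC}(p)$ over distributions in which $U_{11}$ is constant.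
   Context: $\mathcal R_{CC}$ is the achievable rate region of Cao and Chen for the cognitive interference channel, written with index 1 for the primary user and index 2 for the cognitive user; $U_{10},U_{11},V_{11},V_{20},V_{22}$ are auxiliary random variables. All mutual informations are evaluated under the indicated joint distribution. *)

(* Defs.v *)
From Stdlib Require Import Reals.
From mathcomp Require Import all_boot.
Set Implicit Arguments. Unset Strict Implicit. Unset Printing Implicit Defensive.

Local Open Scope R_scope.

Definition rsum (T : finType) (F : T -> R) : R := \big[Rplus/R0]_(t : T) F t.

Definition is_pmf (T : finType) (p : T -> R) : Prop :=
  (forall t, 0 <= p t) /\ rsum p = 1.

Definition log2 (x : R) : R := ln x / ln 2.

Definition law (Om T : finType) (p : Om -> R) (f : Om -> T) (t : T) : R :=
  \big[Rplus/R0]_(w : Om | f w == t) p w.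

(* Shannon entropy in bits (convention 0 log 0 = 0, since ln 0 = 0 in Stdlib). *)
Definition entropy (Om T : finType) (p : Om -> R) (f : Om -> T) : R :=
  rsum (fun t => - (law p f t * log2 (law p f t))).

Definition cmi (Om A B C : finType) (p : Om -> R)
  (a : Om -> A) (b : Om -> B) (c : Om -> C) : R :=
  entropy p (fun w => (a w, c w)) + entropy p (fun w => (b w, c w))
  - entropy p (fun w => (a w, b w, c w)) - entropy p c.

Definition mi (Om A B : finType) (p : Om -> R) (a : Om -> A) (b : Om -> B) : R :=
  cmi p a b (fun _ => tt).

Definition is_channel (X1 X2 Y1 Y2 : finType) (W : X1 -> X2 -> Y1 * Y2 -> R) : Prop :=
  forall x1 x2, is_pmf (W x1 x2).

Definition tup7 (U10 U11 V11 V20 V22 X1 X2 : finType) : finType :=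
  (U10 * U11 * V11 * V20 * V22 * X1 * X2)%type.

Section RCC.
Variables (U10 U11 V11 V20 V22 X1 X2 Y1 Y2 : finType).
Variable W : X1 -> X2 -> Y1 * Y2 -> R.
Variable P : tup7 U10 U11 V11 V20 V22 X1 X2 -> R.

Definition Omega : finType := (tup7 U10 U11 V11 V20 V22 X1 X2 * (Y1 * Y2))%type.

Definition jointP (w : Omega) : R := P w.1 * W w.1.1.2 w.1.2 w.2.

Definition rU10 (w : Omega) : U10 := w.1.1.1.1.1.1.1.
Definition rU11 (w : Omega) : U11 := w.1.1.1.1.1.1.2.
Definition rV11 (w : Omega) : V11 := w.1.1.1.1.1.2.
Definition rV20 (w : Omega) : V20 := w.1.1.1.1.2.
Definition rV22 (w : Omega) : V22 := w.1.1.1.2.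
Definition rY1 (w : Omega) : Y1 := w.2.1.
Definition rY2 (w : Omega) : Y2 := w.2.2.

Definition inRCC (R1 R2 : R) : Prop :=
  let p := jointP in
  R1 <= mi p rY1 (fun w => (rV11 w, rU11 w, rV20 w, rU10 w)) /\
  R2 <= cmi p rY2 (fun w => (rV20 w, rV22 w)) rU10
        - cmi p (fun w => (rV22 w, rV20 w)) rU11 rU10 /\
  R1 + R2 <= cmi p rY1 (fun w => (rV11 w, rU11 w)) (fun w => (rV20 w, rU10 w))
             + mi p rY2 (fun w => (rV22 w, rV20 w, rU10 w))
             - cmi p rV22 (fun w => (rU11 w, rV11 w)) (fun w => (rV20 w, rU10 w)) /\
  R1 + R2 <= mi p rY1 (fun w => (rV11 w, rU11 w, rV20 w, rU10 w))
             + cmi p rY2 rV22 (fun w => (rV20 w, rU10 w))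
             - cmi p rV22 (fun w => (rU11 w, rV11 w)) (fun w => (rV20 w, rU10 w)) /\
  2 * R2 + R1 <= cmi p rY1 (fun w => (rV11 w, rU11 w, rV20 w)) rU10
                 + cmi p rY2 rV22 (fun w => (rV20 w, rU10 w))
                 + mi p rY2 (fun w => (rV20 w, rV22 w, rU10 w))
                 - cmi p rV22 (fun w => (rU11 w, rV11 w)) (fun w => (rV20 w, rU10 w))
                 - cmi p (fun w => (rV22 w, rV20 w)) rU11 rU10.
End RCC.

Definition mergeU11 (U10 U11 V11 V20 V22 X1 X2 : finType)
  (P : tup7 U10 U11 V11 V20 V22 X1 X2 -> R)
  (t : tup7 U10 unit (V11 * U11)%type V20 V22 X1 X2) : R :=
  let: (u10, _, (v11, u11), v20, v22, x1, x2) := t in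
  P (u10, u11, v11, v20, v22, x1, x2).

(* Main.v *)
From HB Require Import structures.
Require Import Defs.
From Stdlib Require Import Reals Lra FunctionalExtensionality.
From mathcomp Require Import all_boot.
Set Implicit Arguments. Unset Strict Implicit.
Local Open Scope R_scope.

Lemma RplusA : associative Rplus. Proof. move=> *; rewrite Rplus_assoc //. Qed.
HB.instance Definition _ := Monoid.isComLaw.Build R R0 Rplus RplusA Rplus_comm Rplus_0_l.

Lemma bigR_mulr (I : finType) (P : pred I) (G : I -> R) c :
  \big[Rplus/R0]_(i | P i) (G i * c) = (\big[Rplus/R0]_(i | P i) G i) * c.
Proof. apply: (big_rec2 (fun a b => a = b * c)) => [|i a b _ ->]; lra. Qed.

Lemma bigR_le (I : finType) (P : pred I) (G H : I -> R) :
  (forall i, P i -> G i <= H i) ->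
  \big[Rplus/R0]_(i | P i) G i <= \big[Rplus/R0]_(i | P i) H i.
Proof. move=> h; apply: (big_rec2 (fun a b => a <= b)) => [|i a b Pi hab]; [lra|]. have := h i Pi; lra. Qed.

Lemma bigR_ge0 (I : finType) (P : pred I) (G : I -> R) :
  (forall i, P i -> 0 <= G i) -> 0 <= \big[Rplus/R0]_(i | P i) G i.
Proof. move=> h; apply: (big_rec (fun a => 0 <= a)) => [|i a Pi ha]; [lra|]. have := h i Pi; lra. Qed.

Lemma bigR_add (I : finType) (P : pred I) (G H : I -> R) :
  \big[Rplus/R0]_(i | P i) (G i + H i) = \big[Rplus/R0]_(i | P i) G i + \big[Rplus/R0]_(i | P i) H i.
Proof. by rewrite big_split. Qed.

Lemma sum_by_law (Om T : finType) (p : Om -> R) (f : Om -> T) (F : T -> R) :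
  \big[Rplus/R0]_w (p w * F (f w)) = \big[Rplus/R0]_t (law p f t * F t).
Proof.
rewrite (partition_big f predT) //=; apply: eq_bigr => t _.
rewrite /law -bigR_mulr; apply: eq_bigr => w /eqP -> //.
Qed.

Lemma bigR_opp (I : finType) (P : pred I) (G : I -> R) :
  \big[Rplus/R0]_(i | P i) (- G i) = - \big[Rplus/R0]_(i | P i) G i.
Proof. apply: (big_rec2 (fun a b => a = - b)) => [|i a b _ ->]; lra. Qed.

Lemma entropyE (Om T : finType) (p : Om -> R) (f : Om -> T) :
  entropy p f = - \big[Rplus/R0]_w (p w * log2 (law p f (f w))).
Proof.
rewrite (sum_by_law p f (fun t => log2 (law p f t))) /entropy /rsum.
by rewrite bigR_opp.
Qed.

Lemma law_equiv (Om T T' : finType) (p : Om -> R) (f : Om -> T) (g : Om -> T') w :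
  (forall w1 w2, f w1 = f w2 <-> g w1 = g w2) -> law p f (f w) = law p g (g w).
Proof.
move=> h; rewrite /law; apply: eq_bigl => w'.
by apply/eqP/eqP => /h.
Qed.

Lemma entropy_equiv (Om T T' : finType) (p : Om -> R) (f : Om -> T) (g : Om -> T') :
  (forall w1 w2, f w1 = f w2 <-> g w1 = g w2) -> entropy p f = entropy p g.
Proof.
move=> h; rewrite !entropyE; congr (- _); apply: eq_bigr => w _.
by rewrite (law_equiv p w h).
Qed.

Lemma entropy_transfer (Om Om' T T' : finType) (p : Om -> R) (p' : Om' -> R)
  (s : Om' -> Om) (f : Om -> T) (f' : Om' -> T') :
  bijective s -> (forall w, p' w = p (s w)) ->
  (forall w1 w2, f' w1 = f' w2 <-> f (s w1) = f (s w2)) ->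
  entropy p' f' = entropy p f.
Proof.
move=> bs hp hf; rewrite (entropy_equiv p' hf) !entropyE; congr (- _).
rewrite (reindex s); last exact: onW_bij.
apply: eq_bigr => w _; rewrite hp; congr (_ * log2 _).
rewrite /law (reindex s); last exact: onW_bij.
by apply: eq_bigr => i _; rewrite hp.
Qed.

Lemma bigR_mull (I : finType) (P : pred I) (G : I -> R) c :
  \big[Rplus/R0]_(i | P i) (c * G i) = c * (\big[Rplus/R0]_(i | P i) G i).
Proof. apply: (big_rec2 (fun a b => a = c * b)) => [|i a b _ ->]; lra. Qed.

Section Law.
Variables (Om : finType) (p : Om -> R).
Hypothesis p_ge0 : forall w, 0 <= p w.

Lemma law_ge0 (T : finType) (f : Om -> T) t : 0 <= law p f t.
Proof. by apply: bigR_ge0. Qed.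

Lemma law_mono (T T' : finType) (f : Om -> T) (g : Om -> T') t u :
  (forall w, f w = t -> g w = u) -> law p f t <= law p g u.
Proof.
move=> h; rewrite /law (big_mkcond (fun w => f w == t)) (big_mkcond (fun w => g w == u)).
apply: bigR_le => w _; case: eqP => [/h ->|_]; rewrite ?eqxx; first lra.
case: (_ == _); [apply: p_ge0|lra].
Qed.

Lemma law_self (T : finType) (f : Om -> T) w : p w <= law p f (f w).
Proof.
rewrite /law (bigD1 w) ?eqxx //=.
have := @bigR_ge0 _ (fun i => (f i == f w) && (i != w)) p (fun i _ => p_ge0 i); lra.
Qed.

Lemma law_marg (A C : finType) (a : Om -> A) (c : Om -> C) z :
  \big[Rplus/R0]_x law p (fun w => (a w, c w)) (x, z) = law p c z.
Proof.
rewrite /law (partition_big a predT) //=; apply: eq_bigr => x _.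
by apply: eq_bigl => w; rewrite xpair_eqE andbC.
Qed.

Lemma law_total (T : finType) (f : Om -> T) :
  \big[Rplus/R0]_t law p f t = \big[Rplus/R0]_w p w.
Proof.
have := sum_by_law p f (fun _ => 1).
rewrite (eq_bigr (fun w => p w)) => [|w _]; last lra.
by rewrite (eq_bigr (fun t => law p f t)) // => t _; lra.
Qed.
End Law.

Lemma ln_le_x1 x : 0 < x -> ln x <= x - 1.
Proof. move=> hx; have := exp_ineq1_le (ln x); rewrite exp_ln //; lra. Qed.

Lemma ln2_gt0 : 0 < ln 2.
Proof. rewrite -ln_1; apply: ln_increasing; lra. Qed.

Lemma sum_prod (I J : finType) (F : I -> R) (G : J -> R) c :
  \big[Rplus/R0]_i \big[Rplus/R0]_j (F i * G j * c) =
  (\big[Rplus/R0]_i F i) * (\big[Rplus/R0]_j G j) * c.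
Proof.
rewrite -[in RHS]bigR_mulr -[in RHS]bigR_mulr; apply: eq_bigr => i _.
by rewrite -bigR_mull -bigR_mulr.
Qed.

Lemma cmi_ge0 (Om A B C : finType) (p : Om -> R) (a : Om -> A) (b : Om -> B) (c : Om -> C) :
  (forall w, 0 <= p w) -> 0 <= cmi p a b c.
Proof.
move=> p0.
set fac := fun w => (a w, c w).
set fbc := fun w => (b w, c w).
set fabc := fun w => (a w, b w, c w).
set lac := fun w => law p fac (fac w).
set lbc := fun w => law p fbc (fbc w).
set labc := fun w => law p fabc (fabc w).
set lc := fun w => law p c (c w).
have l2 := ln2_gt0.
set X := fun w => ln (labc w) + ln (lc w) - ln (lac w) - ln (lbc w).
have E : cmi p a b c = \big[Rplus/R0]_w (p w * X w * / ln 2).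
  rewrite /cmi !entropyE.
  rewrite [RHS](eq_bigr (fun w => p w * log2 (labc w) + p w * log2 (lc w)
     + - (p w * log2 (lac w)) + - (p w * log2 (lbc w)))); last first.
    move=> w _; rewrite /X /log2; field; lra.
  rewrite !bigR_add !bigR_opp. rewrite /labc /lc /lac /lbc /fac /fbc /fabc. lra.
set G := fun t : A * B * C => law p fac (t.1.1, t.2) * law p fbc (t.1.2, t.2)
          * / (law p fabc t * law p c t.2).
set q := fun w => G (fabc w).
have pw : forall w, p w * (1 - q w) * / ln 2 <= p w * X w * / ln 2.
  move=> w; apply: Rmult_le_compat_r; first by left; apply: Rinv_0_lt_compat.
  case: (p0 w) => hp; last by rewrite -hp; lra.
  apply: Rmult_le_compat_l; first lra.
  have h1 : 0 < lac w by have := law_self p0 fac w; rewrite /lac; lra.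
  have h2 : 0 < lbc w by have := law_self p0 fbc w; rewrite /lbc; lra.
  have h3 : 0 < labc w by have := law_self p0 fabc w; rewrite /labc; lra.
  have h4 : 0 < lc w by have := law_self p0 c w; rewrite /lc; lra.
  have qE : q w = lac w * lbc w * / (labc w * lc w) by [].
  have hq : 0 < q w by rewrite qE; apply: Rmult_lt_0_compat; [nra| apply: Rinv_0_lt_compat; nra].
  have := ln_le_x1 hq.
  rewrite qE ln_mult ?ln_mult ?ln_Rinv ?ln_mult //; try nra.
  rewrite /X; lra.
  by apply: Rinv_0_lt_compat; nra.
have S : \big[Rplus/R0]_w (p w * q w) <= \big[Rplus/R0]_w p w.
  have Hq : \big[Rplus/R0]_w (p w * q w) = \big[Rplus/R0]_t (law p fabc t * G t)
    by rewrite /q; exact: (@sum_by_law _ _ p fabc G).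
  rewrite Hq.
  set H := fun t : A * B * C => law p fac (t.1.1, t.2) * law p fbc (t.1.2, t.2) * / law p c t.2.
  have Hge : forall t, law p fabc t * G t <= H t.
    move=> t; have l1 := law_ge0 p0 fabc t; have l2' := law_ge0 p0 fac (t.1.1, t.2).
    have l3 := law_ge0 p0 fbc (t.1.2, t.2); have l4 := law_ge0 p0 c t.2.
    have li : 0 <= / law p c t.2.
      case: l4 => h; first by left; apply: Rinv_0_lt_compat.
      by rewrite -h Rinv_0; lra.
    case: l1 => h1; last first.
      rewrite -h1 Rmult_0_l /H. apply: Rmult_le_pos; [apply: Rmult_le_pos|] => //.
    have l5 : law p fabc t <= law p c t.2.
      by apply: law_mono => // w <-.
    apply: Req_le; rewrite /G /H; field; split; apply: Rgt_not_eq; [exact: (Rlt_le_trans _ _ _ h1 l5)| exact: h1].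
  apply: (Rle_trans _ _ _ (@bigR_le _ (fun _ => true) _ _ (fun t _ => Hge t))).
  transitivity (\big[Rplus/R0]_xy \big[Rplus/R0]_z H (xy, z)).
    by rewrite pair_bigA; apply: Req_le; apply: eq_bigr => -[].
  rewrite (_ : \big[Rplus/R0]_xy \big[Rplus/R0]_z H (xy, z) =
     \big[Rplus/R0]_x \big[Rplus/R0]_y \big[Rplus/R0]_z H ((x, y), z)); last first.
    by rewrite [in RHS]pair_bigA; apply: eq_bigr => -[].
  under eq_bigr => x _ do rewrite exchange_big.
  rewrite exchange_big /H /=.
  under eq_bigr => z _ do rewrite sum_prod (law_marg p a c z) (law_marg p b c z).
  rewrite -(law_total p c); apply: bigR_le => z _.
  have := law_ge0 p0 c z; case => h; last by rewrite -h; lra.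
  apply: Req_le; field; apply: Rgt_not_eq; exact: h.
rewrite E; apply: (Rle_trans _ _ _ _ (@bigR_le _ (fun _ => true) _ _ (fun w _ => pw w))).
rewrite bigR_mulr; apply: Rmult_le_pos; last by left; apply: Rinv_0_lt_compat.
rewrite (eq_bigr (fun w => p w + - (p w * q w))); last by move=> w _; ring.
rewrite bigR_add bigR_opp. lra.
Qed.

Lemma cmi_unit (Om A C : finType) (p : Om -> R) (a : Om -> A) (b : Om -> unit) (c : Om -> C) :
  cmi p a b c = 0.
Proof.
rewrite /cmi.
rewrite (@entropy_equiv _ _ _ p (fun w => (b w, c w)) c); last first.
  by move=> w1 w2; split => [[]|->] //; case: (b w1); case: (b w2).
rewrite (@entropy_equiv _ _ _ p (fun w => (a w, b w, c w)) (fun w => (a w, c w))); last first.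
  move=> w1 w2; split => [[-> _ ->]|[-> ->]] //; by case: (b w1); case: (b w2).
lra.
Qed.

Definition equiv_on (Om Om' T T' : finType) (s : Om' -> Om) (f' : Om' -> T') (f : Om -> T) :=
  forall w1 w2, f' w1 = f' w2 <-> f (s w1) = f (s w2).

Lemma pair_equiv (Om Om' A A' C C' : finType) (s : Om' -> Om) (a' : Om' -> A') (a : Om -> A)
  (c' : Om' -> C') (c : Om -> C) :
  equiv_on s a' a -> equiv_on s c' c ->
  forall w1 w2, (a' w1, c' w1) = (a' w2, c' w2) <-> (a (s w1), c (s w1)) = (a (s w2), c (s w2)).
Proof.
move=> ha hc w1 w2; rewrite !pair_equal_spec.
by have := ha w1 w2; have := hc w1 w2; tauto.
Qed.

Lemma cmi_transfer (Om Om' A A' B B' C C' : finType) (p : Om -> R) (p' : Om' -> R)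
  (s : Om' -> Om) (a' : Om' -> A') (a : Om -> A) (b' : Om' -> B') (b : Om -> B)
  (c' : Om' -> C') (c : Om -> C) :
  bijective s -> (forall w, p' w = p (s w)) ->
  equiv_on s a' a -> equiv_on s b' b -> equiv_on s c' c ->
  cmi p' a' b' c' = cmi p a b c.
Proof.
move=> bs hp ha hb hc; rewrite /cmi.
rewrite (entropy_transfer (f := fun w => (a w, c w)) bs hp (pair_equiv ha hc)).
rewrite (entropy_transfer (f := fun w => (b w, c w)) bs hp (pair_equiv hb hc)).
rewrite (entropy_transfer (f := fun w => (a w, b w, c w)) bs hp
          (pair_equiv (a' := fun w => (a' w, b' w)) (a := fun w => (a w, b w)) (pair_equiv ha hb) hc)).
by rewrite (entropy_transfer bs hp hc).
Qed.

Lemma mi_transfer (Om Om' A A' B B' : finType) (p : Om -> R) (p' : Om' -> R)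
  (s : Om' -> Om) (a' : Om' -> A') (a : Om -> A) (b' : Om' -> B') (b : Om -> B) :
  bijective s -> (forall w, p' w = p (s w)) ->
  equiv_on s a' a -> equiv_on s b' b -> mi p' a' b' = mi p a b.
Proof. by move=> bs hp ha hb; apply: (cmi_transfer bs hp ha hb) => w1 w2. Qed.

Section Main.
Variables (U10 U11 V11 V20 V22 X1 X2 Y1 Y2 : finType).

Definition tau (t : tup7 U10 unit (V11 * U11)%type V20 V22 X1 X2) : tup7 U10 U11 V11 V20 V22 X1 X2 :=
  let: (u10, _, (v11, u11), v20, v22, x1, x2) := t in (u10, u11, v11, v20, v22, x1, x2).
Definition taui (t : tup7 U10 U11 V11 V20 V22 X1 X2) : tup7 U10 unit (V11 * U11)%type V20 V22 X1 X2 :=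
  let: (u10, u11, v11, v20, v22, x1, x2) := t in (u10, tt, (v11, u11), v20, v22, x1, x2).

Lemma tau_bij : bijective tau.
Proof.
exists taui.
  by case=> [[[[[[u10 []] [v11 u11]] v20] v22] x1] x2].
by case=> [[[[[[u10 u11] v11] v20] v22] x1] x2].
Qed.

Definition sig (w : Omega U10 unit (V11 * U11)%type V20 V22 X1 X2 Y1 Y2) :
  Omega U10 U11 V11 V20 V22 X1 X2 Y1 Y2 := (tau w.1, w.2).

Lemma sig_bij : bijective sig.
Proof.
exists (fun w => (taui w.1, w.2)).
  case=> t y; rewrite /sig /=. by case: t => [[[[[[u10 []] [v11 u11]] v20] v22] x1] x2].
case=> t y; rewrite /sig /=. by case: t => [[[[[[u10 u11] v11] v20] v22] x1] x2].
Qed.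
End Main.

Local Notation RY1 := (@rY1 _ _ _ _ _ _ _ _ _).
Local Notation RY2 := (@rY2 _ _ _ _ _ _ _ _ _).
Local Notation RU10 := (@rU10 _ _ _ _ _ _ _ _ _).
Local Notation RU11 := (@rU11 _ _ _ _ _ _ _ _ _).
Local Notation RV22 := (@rV22 _ _ _ _ _ _ _ _ _).

Ltac solve_eqv :=
  let w1 := fresh "w1" in let w2 := fresh "w2" in
  move=> w1 w2;
  case: w1 => [[[[[[[? []] [? ?]] ?] ?] ?] ?] [? ?]];
  case: w2 => [[[[[[[? []] [? ?]] ?] ?] ?] ?] [? ?]];
  cbv [rY1 rY2 rU10 rU11 rV11 rV20 rV22 sig tau]; simpl;
  split => h; inversion h; subst; reflexivity.

Unset Implicit Arguments.
Theorem mainTheorem3 (U10 U11 V11 V20 V22 X1 X2 Y1 Y2 : finType)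
  (W : X1 -> X2 -> (Y1 * Y2)%type -> R)
  (P : tup7 U10 U11 V11 V20 V22 X1 X2 -> R)
  (HW : is_channel W) (HP : is_pmf P) :
  (forall R1 R2 : R,
     inRCC W P R1 R2 -> inRCC W (mergeU11 P) R1 R2) /\
  (forall R1 R2 : R, inRCC W P R1 R2 ->
     exists Q : tup7 U10 unit (V11 * U11)%type V20 V22 X1 X2 -> R,
       is_pmf Q /\ inRCC W Q R1 R2).
Proof.
have part1 : forall R1 R2 : R, inRCC W P R1 R2 -> inRCC W (mergeU11 P) R1 R2.
  move=> R1 R2.
  set p := jointP W P.
  set p' := jointP W (mergeU11 P).
  have bs := @sig_bij U10 U11 V11 V20 V22 X1 X2 Y1 Y2.
  have hp : forall w, p' w = p (sig w).
    by case=> [[[[[[[? []] [? ?]] ?] ?] ?] ?] [? ?]].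
  have p0 : forall w, 0 <= p w.
    move=> w; rewrite /p /jointP; apply: Rmult_le_pos; first by case: HP => h _; apply: h.
    by case: (HW w.1.1.2 w.1.2) => h _; apply: h.
  have e1 : mi p' RY1 (fun w => (rV11 w, rU11 w, rV20 w, rU10 w))
          = mi p RY1 (fun w => (rV11 w, rU11 w, rV20 w, rU10 w)).
    by apply: (mi_transfer bs hp); solve_eqv.
  have e2 : cmi p' RY2 (fun w => (rV20 w, rV22 w)) RU10 = cmi p RY2 (fun w => (rV20 w, rV22 w)) RU10.
    by apply: (cmi_transfer bs hp); solve_eqv.
  have e3 : cmi p' (fun w => (rV22 w, rV20 w)) RU11 RU10 = 0 by apply: cmi_unit.
  have g3 : 0 <= cmi p (fun w => (rV22 w, rV20 w)) RU11 RU10 by apply: cmi_ge0.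
  have e4 : cmi p' RY1 (fun w => (rV11 w, rU11 w)) (fun w => (rV20 w, rU10 w))
          = cmi p RY1 (fun w => (rV11 w, rU11 w)) (fun w => (rV20 w, rU10 w)).
    by apply: (cmi_transfer bs hp); solve_eqv.
  have e5 : mi p' RY2 (fun w => (rV22 w, rV20 w, rU10 w)) = mi p RY2 (fun w => (rV22 w, rV20 w, rU10 w)).
    by apply: (mi_transfer bs hp); solve_eqv.
  have e6 : cmi p' RV22 (fun w => (rU11 w, rV11 w)) (fun w => (rV20 w, rU10 w))
          = cmi p RV22 (fun w => (rU11 w, rV11 w)) (fun w => (rV20 w, rU10 w)).
    by apply: (cmi_transfer bs hp); solve_eqv.
  have e7 : cmi p' RY2 RV22 (fun w => (rV20 w, rU10 w)) = cmi p RY2 RV22 (fun w => (rV20 w, rU10 w)).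
    by apply: (cmi_transfer bs hp); solve_eqv.
  have e8 : cmi p' RY1 (fun w => (rV11 w, rU11 w, rV20 w)) RU10 = cmi p RY1 (fun w => (rV11 w, rU11 w, rV20 w)) RU10.
    by apply: (cmi_transfer bs hp); solve_eqv.
  have e9 : mi p' RY2 (fun w => (rV20 w, rV22 w, rU10 w)) = mi p RY2 (fun w => (rV20 w, rV22 w, rU10 w)).
    by apply: (mi_transfer bs hp); solve_eqv.
  rewrite /inRCC -/p -/p' e1 e2 e3 e4 e5 e6 e7 e8 e9.
  case=> [h1 [h2 [h3 [h4 h5]]]]; lra.
split => // R1 R2 h; exists (mergeU11 P); split; last exact: part1.
case: HP => H0 H1; split.
  by case=> [[[[[[u10 []] [v11 u11]] v20] v22] x1] x2]; apply: H0.
rewrite -H1 /rsum [in RHS](reindex (@tau U10 U11 V11 V20 V22 X1 X2)); last exact: onW_bij (@tau_bij _ _ _ _ _ _ _).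
by apply: eq_bigr => -[[[[[[u10 []] [v11 u11]] v20] v22] x1] x2].
Qed.
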